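(* Consider $n$ buses with line susceptances $b_{il}=b_{li}\ge 0$ ($b_{ii}=0$; $b_{il}=0$ if there is no line), maximal voltage magnitudes $V_{\max,i}>0$, and an operating point $(V_0,\theta_0)\in\mathbb{R}^n\times\mathbb{R}^n$ satisfying Assumption A. Let $L_B$ be the matrix with entries $$L_{B,ij}=\frac{\partial}{\partial\theta_j}\sum_{l=1}^n V_{0,i}V_{0,l}b_{il}\sin(\theta_i-\theta_l)\Big|_{\theta=\theta_0},$$ let $\gamma_i:=2\sum_{j=1}^n V_{\max,i}V_{\max,j}b_{ij}$, assumed positive for all $i$, and $\Gamma=\operatorname{diag}(\gamma_1,\dots,\gamma_n)$. Then for any conformal partitioning (after a permutation of the bus indices) $$\Gamma=\begin{bmatrix}\Gamma_1&0\\0&\Gamma_2\end{bmatrix},\qquad L_B=\begin{bmatrix}L_{B,11}&L_{B,12}\\ L_{B,21}&L_{B,22}\end{bmatrix}$$ with $L_{B,22}$ invertible (the second block being allowed to be empty, in which case the Schur complement below is $L_B$ itself), $$0\preceq \Gamma_1^{-1/2}\big(L_{B,11}-L_{B,12}L_{B,22}^{-1}L_{B,21}\big)\Gamma_1^{-1/2}\preceq I.$$ In particular $\Gamma^{-1/2}L_B\Gamma^{-1/2}\in\mathcal{L}$.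
   Context: Assumption A: at the operating point, the angle difference $|\theta_{0,i}-\theta_{0,j}|$ across each transmission line (i.e. for each pair with $b_{ij}>0$) is less than $\pi/2$, and the voltage magnitude at each bus satisfies $0<V_{0,i}\le V_{\max,i}$. $\mathcal{L}:=\{L\in\mathbb{R}^{n\times n}: L=L^T,\ 0\preceq L\preceq I\}$. *)

(* Defs.v *)
From Stdlib Require Import Reals Lra.
Open Scope R_scope.

Fixpoint rsum (n : nat) (f : nat -> R) : R :=
  match n with
  | O => 0
  | S k => rsum k f + f k
  end.

Definition rsum_in (n : nat) (P : nat -> bool) (f : nat -> R) : R :=
  rsum n (fun k => if P k then f k else 0).

Definition upd (th : nat -> R) (j : nat) (t : R) : nat -> R :=
  fun k => if Nat.eqb k j then t else th k.

Definition Pinj (n : nat) (b : nat -> nat -> R) (V : nat -> R) (th : nat -> R) (i : nat) : R :=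
  rsum n (fun l => V i * V l * b i l * sin (th i - th l)).

Definition gam (n : nat) (b : nat -> nat -> R) (Vmax : nat -> R) (i : nat) : R :=
  2 * rsum n (fun j => Vmax i * Vmax j * b i j).

Definition kron (i j : nat) : R := if Nat.eqb i j then 1 else 0.

(* Schur complement entry L11 - L12 M L21 where M is the inverse of the block on S2 *)
Definition schur (n : nat) (S2 : nat -> bool) (L M : nat -> nat -> R) (i j : nat) : R :=
  L i j - rsum_in n S2 (fun k => rsum_in n S2 (fun l => L i k * M k l * L l j)).

Definition qform (n : nat) (P : nat -> bool) (g : nat -> R) (A : nat -> nat -> R)
  (x : nat -> R) : R :=
  rsum_in n P (fun i => rsum_in n P (fun j =>
     x i * (A i j / (sqrt (g i) * sqrt (g j))) * x j)).

Definition sqnorm (n : nat) (P : nat -> bool) (x : nat -> R) : R :=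
  rsum_in n P (fun i => x i * x i).

(* Main.v *)
Require Import Defs.
From Stdlib Require Import Reals Lra Lia Psatz Setoid Morphisms FunctionalExtensionality.
Open Scope R_scope.

Lemma rsum_ext n f g : (forall k, (k < n)%nat -> f k = g k) -> rsum n f = rsum n g.
Proof. induction n; simpl; intros H; auto. rewrite IHn by (intros; apply H; lia). rewrite H by lia; auto. Qed.

#[local] Instance rsum_proper n : Proper (pointwise_relation nat eq ==> eq) (rsum n).
Proof. intros f g H. apply rsum_ext; intros; apply H. Qed.

Lemma rsum_add n f g : rsum n (fun k => f k + g k) = rsum n f + rsum n g.
Proof. induction n; simpl; [lra|rewrite IHn; lra]. Qed.
Lemma rsum_sub n f g : rsum n (fun k => f k - g k) = rsum n f - rsum n g.
Proof. induction n; simpl; [lra|rewrite IHn; lra]. Qed.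
Lemma rsum_opp n f : rsum n (fun k => - f k) = - rsum n f.
Proof. induction n; simpl; [lra|rewrite IHn; lra]. Qed.
Lemma rsum_mull n c f : rsum n (fun k => c * f k) = c * rsum n f.
Proof. induction n; simpl; [lra|rewrite IHn; lra]. Qed.
Lemma rsum_mulr n c f : rsum n (fun k => f k * c) = rsum n f * c.
Proof. induction n; simpl; [lra|rewrite IHn; lra]. Qed.
Lemma rsum_0 n : rsum n (fun _ => 0) = 0.
Proof. induction n; simpl; [lra|rewrite IHn; lra]. Qed.
Lemma rsum_swap n m f : rsum n (fun i => rsum m (fun j => f i j)) = rsum m (fun j => rsum n (fun i => f i j)).
Proof. induction n; simpl. rewrite rsum_0; auto. rewrite IHn, <- rsum_add. reflexivity. Qed.
Lemma rsum_kron n j f : (j < n)%nat -> rsum n (fun k => kron k j * f k) = f j.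
Proof.
  induction n; intros Hj; [lia|]. simpl. destruct (Nat.eq_dec j n).
  - subst. rewrite (rsum_ext _ _ (fun _ => 0)). rewrite rsum_0. unfold kron. rewrite Nat.eqb_refl. ring.
    intros k Hk. unfold kron. destruct (Nat.eqb_spec k n); [lia|ring].
  - rewrite IHn by lia. unfold kron. destruct (Nat.eqb_spec n j); [lia|ring].
Qed.
Lemma rsum_kron' n j f : (j < n)%nat -> rsum n (fun k => kron j k * f k) = f j.
Proof.
  intros. rewrite <- (rsum_kron n j f) by auto. apply rsum_ext. intros. unfold kron.
  rewrite Nat.eqb_sym. auto.
Qed.
Lemma rsum_nonneg n f : (forall k, (k<n)%nat -> 0 <= f k) -> 0 <= rsum n f.
Proof. induction n; simpl; intros H; [lra|]. pose proof (H n ltac:(lia)). pose proof (IHn ltac:(intros; apply H; lia)). lra. Qed.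
Lemma rsum_le n f g : (forall k, (k<n)%nat -> f k <= g k) -> rsum n f <= rsum n g.
Proof. induction n; simpl; intros H; [lra|]. pose proof (H n ltac:(lia)). pose proof (IHn ltac:(intros; apply H; lia)). lra. Qed.

Lemma deriv_ext2 f g x l l' : (forall t, f t = g t) -> l = l' -> derivable_pt_lim f x l -> derivable_pt_lim g x l'.
Proof. intros H1 H2 H. assert (f = g) by (apply functional_extensionality; auto). subst; auto. Qed.

Lemma upd_same th j k : upd th j (th j) k = th k.
Proof. unfold upd. destruct (Nat.eqb_spec k j); subst; auto. Qed.

Lemma upd_deriv th j k : derivable_pt_lim (fun t => upd th j t k) (th j) (kron k j).
Proof.
  unfold upd, kron. destruct (k =? j)%nat.
  - apply (deriv_ext2 id _ _ 1); auto. apply derivable_pt_lim_id.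
  - apply (deriv_ext2 (fct_cte (th k)) _ _ 0); auto. apply derivable_pt_lim_const.
Qed.

Lemma term_deriv th j i l c :
  derivable_pt_lim (fun t => c * sin (upd th j t i - upd th j t l)) (th j)
    (c * (cos (th i - th l) * (kron i j - kron l j))).
Proof.
  pose proof (derivable_pt_lim_minus _ _ _ _ _ (upd_deriv th j i) (upd_deriv th j l)) as h1.
  pose proof (derivable_pt_lim_comp _ sin _ _ _ h1 (derivable_pt_lim_sin _)) as h2.
  pose proof (derivable_pt_lim_scal _ c _ _ h2) as h3.
  eapply deriv_ext2; [| |exact h3].
  - intros t. reflexivity.
  - unfold minus_fct. rewrite !upd_same. ring.
Qed.

Lemma rsum_deriv m (f : nat -> R -> R) d x :
  (forall l, (l < m)%nat -> derivable_pt_lim (f l) x (d l)) ->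
  derivable_pt_lim (fun t => rsum m (fun l => f l t)) x (rsum m d).
Proof.
  induction m; intros H; simpl.
  - apply (deriv_ext2 (fct_cte 0) _ _ 0); auto. apply derivable_pt_lim_const.
  - pose proof (derivable_pt_lim_plus _ _ _ _ _ (IHm ltac:(intros; apply H; lia)) (H m ltac:(lia))) as h.
    eapply deriv_ext2; [| |exact h]; reflexivity.
Qed.

Definition w (b : nat -> nat -> R) (V th : nat -> R) i l := V i * V l * b i l * cos (th i - th l).

Lemma L_formula n b V th L i j : (i < n)%nat -> (j < n)%nat ->
  derivable_pt_lim (fun t => Pinj n b V (upd th j t) i) (th j) (L i j) ->
  L i j = rsum n (fun l => w b V th i l * (kron i j - kron l j)).
Proof.
  intros Hi Hj H. eapply uniqueness_limite; [exact H|].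
  unfold Pinj. eapply deriv_ext2; [| |apply (rsum_deriv n (fun l t => V i * V l * b i l * sin (upd th j t i - upd th j t l)) (fun l => V i * V l * b i l * (cos (th i - th l) * (kron i j - kron l j))))].
  - intros t; reflexivity.
  - apply rsum_ext; intros; unfold w; ring.
  - intros l _. apply term_deriv.
Qed.

Definition Q n (L : nat -> nat -> R) (u : nat -> R) :=
  rsum n (fun i => rsum n (fun j => u i * L i j * u j)).

Lemma Q_form n L W u :
  (forall i j, (i < n)%nat -> (j < n)%nat -> L i j = rsum n (fun l => W i l * (kron i j - kron l j))) ->
  Q n L u = rsum n (fun i => rsum n (fun l => W i l * u i * (u i - u l))).
Proof.
  intros HL. unfold Q. apply rsum_ext; intros i Hi.
  rewrite (rsum_ext _ _ (fun j => rsum n (fun l => u i * W i l * (kron i j * u j) - u i * W i l * (kron l j * u j)))).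
  2:{ intros j Hj. rewrite HL by auto. rewrite <- rsum_mull, <- rsum_mulr. apply rsum_ext; intros; ring. }
  rewrite rsum_swap. apply rsum_ext; intros l Hl.
  rewrite rsum_sub, !rsum_mull, !rsum_kron' by auto. ring.
Qed.

Lemma swap_sym n W (F : nat -> nat -> R) :
  (forall i l, (i < n)%nat -> (l < n)%nat -> W i l = W l i) ->
  rsum n (fun i => rsum n (fun l => W i l * F i l)) = rsum n (fun i => rsum n (fun l => W i l * F l i)).
Proof.
  intros Hs. rewrite rsum_swap. apply rsum_ext; intros i Hi. apply rsum_ext; intros l Hl.
  rewrite Hs by auto. ring.
Qed.

Lemma Q_bounds n L W (g u : nat -> R) :
  (forall i j, (i < n)%nat -> (j < n)%nat -> L i j = rsum n (fun l => W i l * (kron i j - kron l j))) ->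
  (forall i l, (i < n)%nat -> (l < n)%nat -> W i l = W l i) ->
  (forall i l, (i < n)%nat -> (l < n)%nat -> 0 <= W i l) ->
  (forall i, (i < n)%nat -> 2 * rsum n (W i) <= g i) ->
  0 <= Q n L u /\ Q n L u <= rsum n (fun i => g i * (u i * u i)).
Proof.
  intros HL Hs Hn Hg. rewrite (Q_form n L W u HL).
  pose proof (swap_sym n W (fun i l => u i * (u i - u l)) Hs) as E1.
  pose proof (swap_sym n W (fun i l => u i * (u i + u l)) Hs) as E2.
  split.
  - assert (E3 : 2 * rsum n (fun i => rsum n (fun l => W i l * u i * (u i - u l))) =
      rsum n (fun i => rsum n (fun l => W i l * ((u i - u l) * (u i - u l))))).
    { replace (2 * _) with (rsum n (fun i => rsum n (fun l => W i l * (u i * (u i - u l))))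
         + rsum n (fun i => rsum n (fun l => W i l * (u l * (u l - u i))))).
      - rewrite <- rsum_add. apply rsum_ext; intros. rewrite <- rsum_add. apply rsum_ext; intros. ring.
      - rewrite <- E1. replace (rsum n (fun i => rsum n (fun l => W i l * u i * (u i - u l))))
          with (rsum n (fun i => rsum n (fun l => W i l * (u i * (u i - u l))))). ring.
        apply rsum_ext; intros; apply rsum_ext; intros; ring. }
    assert (0 <= rsum n (fun i => rsum n (fun l => W i l * ((u i - u l) * (u i - u l))))).
    { apply rsum_nonneg; intros; apply rsum_nonneg; intros. apply Rmult_le_pos; [apply Hn; auto|apply Rle_0_sqr]. }
    lra.
  - assert (E3 : 2 * rsum n (fun i => rsum n (fun l => W i l * (u i * (u i + u l)))) =
      rsum n (fun i => rsum n (fun l => W i l * ((u i + u l) * (u i + u l))))).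
    { replace (2 * _) with (rsum n (fun i => rsum n (fun l => W i l * (u i * (u i + u l))))
         + rsum n (fun i => rsum n (fun l => W i l * (u l * (u l + u i))))).
      - rewrite <- rsum_add. apply rsum_ext; intros. rewrite <- rsum_add. apply rsum_ext; intros. ring.
      - rewrite <- E2. ring. }
    assert (0 <= rsum n (fun i => rsum n (fun l => W i l * ((u i + u l) * (u i + u l))))).
    { apply rsum_nonneg; intros; apply rsum_nonneg; intros. apply Rmult_le_pos; [apply Hn; auto|apply Rle_0_sqr]. }
    assert (E4 : rsum n (fun i => rsum n (fun l => W i l * (u i * (u i + u l)))) =
       rsum n (fun i => 2 * rsum n (W i) * (u i * u i)) - rsum n (fun i => rsum n (fun l => W i l * u i * (u i - u l)))).
    { rewrite <- rsum_sub. apply rsum_ext; intros.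
      rewrite <- rsum_mull, <- rsum_mulr, <- rsum_sub. apply rsum_ext; intros. ring. }
    assert (rsum n (fun i => 2 * rsum n (W i) * (u i * u i)) <= rsum n (fun i => g i * (u i * u i))).
    { apply rsum_le; intros. apply Rmult_le_compat_r; [nra|auto]. }
    lra.
Qed.

Lemma sum4_perm n F :
  rsum n (fun i => rsum n (fun j => rsum n (fun k => rsum n (fun l => F i j k l)))) =
  rsum n (fun k => rsum n (fun l => rsum n (fun i => rsum n (fun j => F i j k l)))).
Proof.
  transitivity (rsum n (fun i => rsum n (fun k => rsum n (fun j => rsum n (fun l => F i j k l))))).
  { apply rsum_ext; intros; apply rsum_swap. }
  transitivity (rsum n (fun i => rsum n (fun k => rsum n (fun l => rsum n (fun j => F i j k l))))).
  { apply rsum_ext; intros; apply rsum_ext; intros; apply rsum_swap. }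
  rewrite rsum_swap. apply rsum_ext; intros; apply rsum_swap.
Qed.

Lemma sum4_perm2 n F :
  rsum n (fun i => rsum n (fun j => rsum n (fun k => rsum n (fun l => F i j k l)))) =
  rsum n (fun j => rsum n (fun l => rsum n (fun k => rsum n (fun i => F i j k l)))).
Proof.
  rewrite rsum_swap. apply rsum_ext; intros j _.
  transitivity (rsum n (fun i => rsum n (fun l => rsum n (fun k => F i j k l)))).
  { apply rsum_ext; intros; apply rsum_swap. }
  rewrite rsum_swap. apply rsum_ext; intros; apply rsum_swap.
Qed.

Lemma double_factor n f g : rsum n (fun i => rsum n (fun j => f i * g j)) = rsum n f * rsum n g.
Proof. rewrite <- rsum_mulr. apply rsum_ext; intros. rewrite <- rsum_mull. reflexivity. Qed.

Definition sb (S2 : nat -> bool) k := if S2 k then 1 else 0.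

Lemma rsum_in_s n S2 f : rsum_in n S2 f = rsum n (fun k => sb S2 k * f k).
Proof. unfold rsum_in, sb. apply rsum_ext; intros. destruct (S2 k); ring. Qed.

Lemma schur_part n L M S2 (z : nat -> R) :
  (forall i j, (i < n)%nat -> (j < n)%nat -> L i j = L j i) ->
  (forall u, 0 <= Q n L u) ->
  (forall i j, (i < n)%nat -> (j < n)%nat -> S2 i = true -> S2 j = true ->
        rsum_in n S2 (fun k => L i k * M k j) = kron i j) ->
  exists t, 0 <= t /\ 0 <= Q n L z - t /\
    rsum n (fun i => rsum n (fun j => z i * schur n S2 L M i j * z j)) = Q n L z - t.
Proof.
  intros Hs Hpos Hinv.
  set (s := sb S2).
  set (v := fun k => rsum n (fun j => L k j * z j)).
  set (y := fun i => - (s i * rsum n (fun l => s l * M i l * v l))).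
  set (T := rsum n (fun k => rsum n (fun l => s k * s l * v k * M k l * v l))).
  assert (Hv : forall k, (k < n)%nat -> rsum n (fun i => z i * L i k) = v k).
  { intros k Hk. unfold v. apply rsum_ext; intros. rewrite Hs by auto. ring. }
  assert (EA : rsum n (fun i => rsum n (fun j => z i * schur n S2 L M i j * z j)) = Q n L z - T).
  { unfold Q. apply eq_trans with
      (rsum n (fun i => rsum n (fun j => z i * L i j * z j)) -
       rsum n (fun i => rsum n (fun j => rsum n (fun k => rsum n (fun l =>
          z i * s k * s l * L i k * M k l * L l j * z j))))).
    { rewrite <- rsum_sub. apply rsum_ext; intros i Hi. rewrite <- rsum_sub. apply rsum_ext; intros j Hj.
      unfold schur. rewrite !rsum_in_s. fold s.
      rewrite (rsum_ext n (fun k => rsum n (fun l => z i * s k * s l * L i k * M k l * L l j * z j))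
                 (fun k => z i * (s k * rsum_in n S2 (fun l => L i k * M k l * L l j)) * z j)).
      - rewrite rsum_mulr, rsum_mull. ring.
      - intros k Hk. rewrite rsum_in_s. fold s. rewrite <- rsum_mull, <- rsum_mull, <- rsum_mulr.
        apply rsum_ext; intros. ring. }
    rewrite sum4_perm. f_equal. unfold T. apply rsum_ext; intros k Hk.
    apply rsum_ext; intros l Hl.
    rewrite (rsum_ext _ _ (fun i => rsum n (fun j => (z i * L i k) * ((s k * s l * M k l) * (L l j * z j))))).
    2:{ intros; apply rsum_ext; intros; ring. }
    rewrite double_factor, Hv by auto. rewrite rsum_mull. fold (v l). ring. }
  set (B := rsum n (fun i => rsum n (fun j => z i * L i j * y j))).
  assert (EB : Q n L (fun k => z k + y k) = Q n L z + 2 * B + Q n L y).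
  { assert (Bs : rsum n (fun i => rsum n (fun j => y i * L i j * z j)) = B).
    { unfold B. rewrite rsum_swap. apply rsum_ext; intros; apply rsum_ext; intros.
      rewrite Hs by auto. ring. }
    unfold Q. unfold B in Bs |- *.
    transitivity (rsum n (fun i => rsum n (fun j => z i * L i j * z j) + rsum n (fun j => z i * L i j * y j)
       + rsum n (fun j => y i * L i j * z j) + rsum n (fun j => y i * L i j * y j))).
    { apply rsum_ext; intros. rewrite <- !rsum_add. apply rsum_ext; intros. ring. }
    rewrite !rsum_add. rewrite Bs. ring. }
  assert (EC : B = - T).
  { unfold B, T. rewrite <- rsum_opp.
    transitivity (rsum n (fun i => rsum n (fun j => rsum n (fun l => - (z i * L i j * (s j * s l * M j l * v l)))))).
    { apply rsum_ext; intros; apply rsum_ext; intros. unfold y. rewrite rsum_opp.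
      rename k into i0, k0 into j0.
      replace (rsum n (fun l => z i0 * L i0 j0 * (s j0 * s l * M j0 l * v l))) with
        (z i0 * L i0 j0 * s j0 * rsum n (fun l => s l * M j0 l * v l)). ring.
      rewrite <- rsum_mull. apply rsum_ext; intros; ring. }
    rewrite rsum_swap. apply rsum_ext; intros j Hj. rewrite rsum_swap. rewrite <- rsum_opp.
    apply rsum_ext; intros l Hl.
    rewrite (rsum_ext _ _ (fun i => (z i * L i j) * (- (s j * s l * M j l * v l)))).
    2:{ intros; ring. }
    rewrite rsum_mulr, Hv by auto. ring. }
  assert (ED : Q n L y = T).
  { unfold Q. transitivity (rsum n (fun i => rsum n (fun j => rsum n (fun k => rsum n (fun l =>
       (s i * s k * M i k * v k) * L i j * (s j * s l * M j l * v l)))))).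
    { apply rsum_ext; intros; apply rsum_ext; intros. unfold y.
      rename k into i0, k0 into j0.
      transitivity (rsum n (fun k => (s k * M i0 k * v k) * (s i0 * L i0 j0 * s j0 * rsum n (fun l => s l * M j0 l * v l)))).
      - rewrite rsum_mulr. ring.
      - apply rsum_ext; intros k _.
        transitivity (s k * M i0 k * v k * (s i0 * L i0 j0 * s j0) * rsum n (fun l => s l * M j0 l * v l)). ring.
        rewrite <- rsum_mull. apply rsum_ext; intros; ring. }
    rewrite sum4_perm2. unfold T. apply rsum_ext; intros j Hj.
    transitivity (rsum n (fun l => rsum n (fun k => (s j * s l * M j l * v l) * (kron j k * (s k * v k))))).
    { apply rsum_ext; intros l Hl. apply rsum_ext; intros k Hk.
      rewrite (rsum_ext _ _ (fun i => (s j * s l * M j l * v l) * (s k * v k) * (s i * (L j i * M i k)))).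
      2:{ intros i Hi. rewrite (Hs i j) by auto. ring. }
      rewrite rsum_mull. unfold s. rewrite <- (rsum_in_s n S2 (fun i => L j i * M i k)).
      unfold sb. destruct (S2 j) eqn:E1; destruct (S2 k) eqn:E2; try ring.
      rewrite Hinv by auto. ring. }
    apply rsum_ext; intros l Hl. rewrite rsum_mull. rewrite rsum_kron' by auto.
    unfold s, sb. destruct (S2 j); ring. }
  exists T. split; [|split].
  - rewrite <- ED. apply Hpos.
  - replace (Q n L z - T) with (Q n L (fun k => z k + y k)) by (rewrite EB, EC, ED; ring). apply Hpos.
  - exact EA.
Qed.

Definition zf (P : nat -> bool) (x g : nat -> R) k := if P k then x k / sqrt (g k) else 0.

Lemma qform_z n P g A x :
  qform n P g A x = rsum n (fun i => rsum n (fun j => zf P x g i * A i j * zf P x g j)).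
Proof.
  unfold qform, rsum_in, zf. apply rsum_ext; intros i _. destruct (P i).
  - apply rsum_ext; intros j _. destruct (P j); [unfold Rdiv; rewrite Rinv_mult; ring | ring].
  - rewrite (rsum_ext _ _ (fun _ => 0)), rsum_0; auto. intros; ring.
Qed.

Lemma sqnorm_z n P g x : (forall i, (i < n)%nat -> 0 < g i) ->
  sqnorm n P x = rsum n (fun i => g i * (zf P x g i * zf P x g i)).
Proof.
  intros Hg. unfold sqnorm, rsum_in, zf. apply rsum_ext; intros i Hi. destruct (P i); [|ring].
  pose proof (Hg i Hi). pose proof (sqrt_lt_R0 _ H). pose proof (sqrt_sqrt (g i) (Rlt_le _ _ H)).
  set (s := sqrt (g i)) in *. rewrite <- H1. field. lra.
Qed.

Theorem lemma1 (n : nat) (b : nat -> nat -> R) (Vmax V0 th0 : nat -> R)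
  (L : nat -> nat -> R)
  (Hbsym : forall i l, (i < n)%nat -> (l < n)%nat -> b i l = b l i)
  (Hbnn : forall i l, (i < n)%nat -> (l < n)%nat -> 0 <= b i l)
  (Hbdiag : forall i, (i < n)%nat -> b i i = 0)
  (HVmax : forall i, (i < n)%nat -> 0 < Vmax i)
  (HAang : forall i j, (i < n)%nat -> (j < n)%nat -> 0 < b i j ->
             Rabs (th0 i - th0 j) < PI / 2)
  (HAV : forall i, (i < n)%nat -> 0 < V0 i <= Vmax i)
  (Hgam : forall i, (i < n)%nat -> 0 < gam n b Vmax i)
  (HL : forall i j, (i < n)%nat -> (j < n)%nat ->
          derivable_pt_lim (fun t => Pinj n b V0 (upd th0 j t) i) (th0 j) (L i j)) :
  (forall (S2 : nat -> bool) (M : nat -> nat -> R),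
     (* M is the inverse of the block L_{B,22} indexed by S2 *)
     (forall i j, (i < n)%nat -> (j < n)%nat -> S2 i = true -> S2 j = true ->
        rsum_in n S2 (fun k => L i k * M k j) = kron i j /\
        rsum_in n S2 (fun k => M i k * L k j) = kron i j) ->
     forall x : nat -> R,
       let S1 := fun k => negb (S2 k) in
       0 <= qform n S1 (gam n b Vmax) (schur n S2 L M) x /\
       qform n S1 (gam n b Vmax) (schur n S2 L M) x <= sqnorm n S1 x)
  /\
  ((forall i j, (i < n)%nat -> (j < n)%nat ->
      L i j / (sqrt (gam n b Vmax i) * sqrt (gam n b Vmax j)) =
      L j i / (sqrt (gam n b Vmax j) * sqrt (gam n b Vmax i))) /\
   forall x : nat -> R,
     0 <= qform n (fun _ => true) (gam n b Vmax) L x /\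
     qform n (fun _ => true) (gam n b Vmax) L x <= sqnorm n (fun _ => true) x).
Proof.
  set (g := gam n b Vmax). set (W := w b V0 th0).
  assert (HLw : forall i j, (i < n)%nat -> (j < n)%nat -> L i j = rsum n (fun l => W i l * (kron i j - kron l j))).
  { intros. apply L_formula; auto. }
  assert (Wsym : forall i l, (i < n)%nat -> (l < n)%nat -> W i l = W l i).
  { intros i l Hi Hl. unfold W, w. rewrite Hbsym by auto.
    replace (th0 l - th0 i) with (- (th0 i - th0 l)) by ring. rewrite cos_neg. ring. }
  assert (Wb : forall i l, (i < n)%nat -> (l < n)%nat -> 0 <= W i l /\ W i l <= Vmax i * Vmax l * b i l).
  { intros i l Hi Hl. unfold W, w. destruct (Rle_lt_or_eq_dec 0 (b i l) (Hbnn i l Hi Hl)) as [Hb|Hb].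
    - pose proof (HAang i l Hi Hl Hb) as Ha. apply Rabs_def2 in Ha.
      assert (0 <= cos (th0 i - th0 l)) by (apply cos_ge_0; lra).
      pose proof (COS_bound (th0 i - th0 l)).
      pose proof (HAV i Hi). pose proof (HAV l Hl).
      assert (0 <= V0 i * V0 l * b i l) by (apply Rmult_le_pos; [nra|lra]).
      assert (V0 i * V0 l <= Vmax i * Vmax l) by nra.
      split; [apply Rmult_le_pos; lra|].
      assert (V0 i * V0 l * b i l <= Vmax i * Vmax l * b i l) by (apply Rmult_le_compat_r; lra).
      nra.
    - rewrite <- Hb. pose proof (HVmax i Hi). pose proof (HVmax l Hl). split; nra. }
  assert (Hg2 : forall i, (i < n)%nat -> 2 * rsum n (W i) <= g i).
  { intros i Hi. unfold g, gam. apply Rmult_le_compat_l; [lra|]. apply rsum_le; intros. apply Wb; auto. }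
  assert (Lsym : forall i j, (i < n)%nat -> (j < n)%nat -> L i j = L j i).
  { assert (Lf : forall i j, (i < n)%nat -> (j < n)%nat -> L i j = kron i j * rsum n (W i) - W i j).
    { intros i j Hi Hj. rewrite HLw by auto.
      rewrite (rsum_ext _ _ (fun l => kron i j * W i l - kron l j * W i l)) by (intros; ring).
      rewrite rsum_sub, rsum_mull, rsum_kron by auto. reflexivity. }
    intros i j Hi Hj. rewrite !Lf by auto. unfold kron. destruct (Nat.eqb_spec i j).
    - subst; rewrite Nat.eqb_refl; ring.
    - destruct (Nat.eqb_spec j i); [lia|]. rewrite Wsym by auto. ring. }
  assert (Qb : forall u, 0 <= Q n L u /\ Q n L u <= rsum n (fun i => g i * (u i * u i))).
  { intros u. apply (Q_bounds n L W); auto. intros; apply Wb; auto. }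
  split; [|split].
  - intros S2 M Hinv x S1.
    destruct (schur_part n L M S2 (zf S1 x g) Lsym (fun u => proj1 (Qb u))
                (fun i j a b c d => proj1 (Hinv i j a b c d))) as [t [Ht1 [Ht2 Ht3]]].
    rewrite qform_z, (sqnorm_z n _ g) by auto. rewrite Ht3.
    pose proof (Qb (zf S1 x g)). split; lra.
  - intros i j Hi Hj. rewrite Lsym by auto. rewrite (Rmult_comm (sqrt (g i))). reflexivity.
  - intros x. rewrite qform_z, (sqnorm_z n _ g) by auto. apply Qb.
Qed.
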